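(* Let $\mathcal{H}$ be a hierarchical generator, $\varphi\in\mathcal{H}$, $k\ge0$, and $\psi\in\mathrm{ch}^k(\varphi)\cap\mathcal{H}$. Then $k\le\mathrm{gap}_{\mathcal{H}}(\psi)\le\mathrm{gap}_{\mathcal{H}}(\varphi)+k$.
   Context: Fix integers $d\ge1$, $n\ge2$, $m\ge2$; $s=n-1$, $p=m-1$. B-splines $\varphi^\ell_{\vec i}(\vec x)=\prod_kQ(n^\ell x_k-i_k)$ for $\ell\ge0$, $\vec i\in\mathbb{Z}^d$, $Q$ the uniform B-spline of order $m$ with knots $0,\dots,m$; $\mathfrak{B}$ the set of all of them; $\mathcal{B}^0=\{\varphi^0_{\vec i}:\vec i\in[-p:0]^d\}$. Children $\mathrm{ch}(\varphi^\ell_{\vec i})=\{\varphi^{\ell+1}_{\vec k}:n\vec i\le\vec k\le n\vec i+sm\}$, extended to sets by union, $\mathrm{ch}^k$ iterated. Cells $I^\ell_{\vec i}=\prod_k[i_kn^{-\ell},(i_k+1)n^{-\ell})$, cell children $\mathrm{ch}(I^\ell_{\vec i})=\{I^{\ell+1}_{\vec k}:n\vec i\le\vec k\le n\vec i+s\}$, $\mathrm{ch}^k$ iterated, $\mathrm{ch}^{-k}(I)=\{J:I\in\mathrm{ch}^k(J)\}$. $\mathbb{I}(\varphi^\ell_{\vec i})=\{I^\ell_{\vec k}:\vec i\le\vec k\le\vec i+p\}$, $\mathbb{I}^k(\varphi)=\mathrm{ch}^k(\mathbb{I}(\varphi))$ ($k\in\mathbb{Z}$), $\mathbb{B}^k(I)=\{\varphi\in\mathfrak{B}:I\in\mathbb{I}^{-k}(\varphi)\}$,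 extended to sets by union; $\mathcal{O}(\varphi,j,\mathcal{H})=\mathbb{B}^j(\mathbb{I}(\varphi))\cap\mathcal{H}$. A lineage is a finite $\mathcal{L}\subset\mathfrak{B}$ with $\mathcal{L}\subset\mathcal{B}^0\cup\mathrm{ch}(\mathcal{L})$; its hierarchical generator is $(\mathcal{B}^0\cup\mathrm{ch}(\mathcal{L}))\setminus\mathcal{L}$. For $\varphi\in\mathcal{H}$, $\mathrm{gap}_{\mathcal{H}}(\varphi)=\sup\{g\in\mathbb{Z}:\mathcal{O}(\varphi,-g,\mathcal{H})\neq\emptyset\}$. *)

(* Defs.v *)
From Stdlib Require Import ZArith List.
From Stdlib Require Fin.
Open Scope Z_scope.

Definition vec (d : nat) := Fin.t d -> Z.

(* B-spline phi^l_i is represented by its level l and index i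
   (the map (l,i) |-> phi^l_i is injective). *)
Record bspline (d : nat) := mkB { blev : nat; bidx : vec d }.
Record cell (d : nat) := mkC { clev : nat; cidx : vec d }.
Arguments mkB {d}. Arguments blev {d}. Arguments bidx {d}.
Arguments mkC {d}. Arguments clev {d}. Arguments cidx {d}.

Section Defs.
Variables (d : nat) (n m : Z).
(* s = n - 1, p = m - 1 *)

Definition chB (phi psi : bspline d) : Prop :=
  blev psi = S (blev phi) /\
  forall j, n * bidx phi j <= bidx psi j <= n * bidx phi j + (n - 1) * m.

Fixpoint chBk (k : nat) (phi psi : bspline d) : Prop :=
  match k with
  | O => psi = phi
  | S k' => exists chi, chBk k' phi chi /\ chB chi psi
  end.

Definition chSet (L : bspline d -> Prop) (psi : bspline d) : Prop :=
  exists phi, L phi /\ chB phi psi.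

Definition B0 (phi : bspline d) : Prop :=
  blev phi = 0%nat /\ forall j, - (m - 1) <= bidx phi j <= 0.

Definition is_lineage (L : bspline d -> Prop) : Prop :=
  (exists l : list (bspline d), forall phi, L phi <-> In phi l) /\
  (forall phi, L phi -> B0 phi \/ chSet L phi).

Definition is_hier_gen (H : bspline d -> Prop) : Prop :=
  exists L, is_lineage L /\
    forall psi, H psi <-> ((B0 psi \/ chSet L psi) /\ ~ L psi).

Definition chC (I J : cell d) : Prop :=
  clev J = S (clev I) /\
  forall j, n * cidx I j <= cidx J j <= n * cidx I j + (n - 1).

Fixpoint chCk (k : nat) (I J : cell d) : Prop :=
  match k with
  | O => J = I
  | S k' => exists K, chCk k' I K /\ chC K J
  end.

Definition II (phi : bspline d) (I : cell d) : Prop :=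
  clev I = blev phi /\ forall j, bidx phi j <= cidx I j <= bidx phi j + (m - 1).

(* II^k(phi) = ch^k(II(phi)) for k in Z; for k < 0,
   ch^k(I) = { J : I in ch^{-k}(J) } *)
Definition IIk (k : Z) (phi : bspline d) (J : cell d) : Prop :=
  exists I, II phi I /\
    (if 0 <=? k then chCk (Z.to_nat k) I J else chCk (Z.to_nat (- k)) J I).

Definition BBk (k : Z) (I : cell d) (phi : bspline d) : Prop := IIk (- k) phi I.

Definition BBkSet (k : Z) (S : cell d -> Prop) (phi : bspline d) : Prop :=
  exists I, S I /\ BBk k I phi.

Definition Ov (phi : bspline d) (j : Z) (H : bspline d -> Prop)
  (psi : bspline d) : Prop := BBkSet j (II phi) psi /\ H psi.

Definition Zsup_is (P : Z -> Prop) (g : Z) : Prop :=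
  (forall x, P x -> x <= g) /\ (forall u, (forall x, P x -> x <= u) -> g <= u).

Definition is_gap (H : bspline d -> Prop) (phi : bspline d) (g : Z) : Prop :=
  Zsup_is (fun g' => exists psi, Ov phi (- g') H psi) g.
End Defs.

(* Main.v *)
Require Import Defs.
From Stdlib Require Import ZArith List Lia Classical FunctionalExtensionality.
Open Scope Z_scope.

Section Aux.
Variables (d : nat) (n m : Z).
Hypothesis hn : 2 <= n.
Hypothesis hm : 2 <= m.

Lemma L1 (phi psi : bspline d) (I : cell d) :
  chB d n m phi psi -> II d m psi I -> exists A, II d m phi A /\ chC d n A I.
Proof.
  intros [hl hb] [hIl hIb].
  exists (mkC (blev phi) (fun j => cidx I j / n)).
  split; [split|split]; simpl; auto.
  - intro j. specialize (hb j). specialize (hIb j).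
    pose proof (Z.div_mod (cidx I j) n ltac:(lia)).
    pose proof (Z.mod_pos_bound (cidx I j) n ltac:(lia)).
    set (q := cidx I j / n) in *. set (r := cidx I j mod n) in *. nia.
  - rewrite hIl, hl; reflexivity.
  - intro j.
    pose proof (Z.div_mod (cidx I j) n ltac:(lia)).
    pose proof (Z.mod_pos_bound (cidx I j) n ltac:(lia)). lia.
Qed.

Lemma L1k (k : nat) : forall (phi psi : bspline d) (I : cell d),
  chBk d n m k phi psi -> II d m psi I -> exists A, II d m phi A /\ chCk d n k A I.
Proof.
  induction k as [|k IH]; intros phi psi I hc hI.
  - simpl in hc. subst. exists I. split; simpl; auto.
  - destruct hc as [chi [h1 h2]].
    destruct (L1 _ _ _ h2 hI) as [B [hB1 hB2]].
    destruct (IH _ _ _ h1 hB1) as [A [hA1 hA2]].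
    exists A. split; auto. exists B. auto.
Qed.

Lemma split_ck (a b : nat) : forall J I, chCk d n (a + b) J I ->
  exists K, chCk d n a J K /\ chCk d n b K I.
Proof.
  induction b as [|b IH]; intros J I h.
  - rewrite Nat.add_0_r in h. exists I. split; simpl; auto.
  - rewrite Nat.add_succ_r in h. destruct h as [K' [h1 h2]].
    destruct (IH _ _ h1) as [K [hK1 hK2]]. exists K. split; auto.
    exists K'. auto.
Qed.

Lemma uniq1 (A A' I : cell d) : chC d n A I -> chC d n A' I -> A = A'.
Proof.
  destruct A as [la ia], A' as [la' ia']; intros [h1 h2] [h1' h2']; simpl in *.
  assert (la = la') by lia. subst. f_equal.
  apply functional_extensionality. intro j.
  specialize (h2 j). specialize (h2' j). nia.
Qed.

Lemma uniqk (k : nat) : forall (A A' I : cell d),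
  chCk d n k A I -> chCk d n k A' I -> A = A'.
Proof.
  induction k as [|k IH]; intros A A' I h h'; simpl in *.
  - congruence.
  - destruct h as [K [h1 h2]], h' as [K' [h1' h2']].
    pose proof (uniq1 _ _ _ h2 h2'). subst. eauto.
Qed.

Lemma levk (k : nat) : forall I J, chCk d n k I J -> clev J = (clev I + k)%nat.
Proof.
  induction k as [|k IH]; intros I J h; simpl in *.
  - subst; lia.
  - destruct h as [K [h1 [h2 _]]]. rewrite h2, (IH _ _ h1). lia.
Qed.
End Aux.

Lemma sup_exists (P : Z -> Prop) (N : nat) : forall x0, P x0 ->
  (forall x, P x -> x <= x0 + Z.of_nat N) -> exists g, Zsup_is P g.
Proof.
  induction N as [|N IH]; intros x0 h0 hb.
  - exists x0. split; [intros x hx; specialize (hb x hx); lia|].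
    intros u hu. apply hu; auto.
  - destruct (classic (exists x, P x /\ x0 < x)) as [[x1 [h1 h2]]|hno].
    + apply (IH x1 h1). intros x hx. specialize (hb x hx). lia.
    + exists x0. split.
      * intros x hx. destruct (Z_lt_le_dec x0 x); auto. exfalso; eauto.
      * intros u hu. apply hu; auto.
Qed.

Theorem lemma7p3 (d : nat) (n m : Z) (hd : (1 <= d)%nat) (hn : 2 <= n) (hm : 2 <= m)
  (H : bspline d -> Prop) (hH : is_hier_gen d n m H)
  (phi psi : bspline d) (k : nat) (hphi : H phi) (hpsi : H psi)
  (hch : chBk d n m k phi psi) :
  exists gpsi gphi : Z,
    is_gap d n m H psi gpsi /\ is_gap d n m H phi gphi /\
    Z.of_nat k <= gpsi <= gphi + Z.of_nat k.
Proof.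
  assert (zero : forall chi, H chi -> exists c, Ov d n m chi (- 0) H c).
  { intros chi hc. exists chi. split; auto.
    exists (mkC (blev chi) (bidx chi)). split.
    - split; simpl; auto. intro j; lia.
    - unfold BBk, IIk. simpl. exists (mkC (blev chi) (bidx chi)). split; auto.
      split; simpl; auto. intro j; lia. }
  assert (bnd : forall chi x, (exists c, Ov d n m chi (- x) H c) ->
             x <= 0 + Z.of_nat (blev chi)).
  { intros chi x [c [[I [hI hB]] _]]. unfold BBk, IIk in hB.
    rewrite Z.opp_involutive in hB. destruct hB as [J [hJ hc]].
    destruct (0 <=? x) eqn:E.
    - apply levk in hc. destruct hI as [hI _], hJ as [hJ _].
      apply Z.leb_le in E. rewrite hI, hJ in hc. lia.
    - apply Z.leb_gt in E. lia. }
  destruct (sup_exists _ (blev psi) 0 (zero psi hpsi) (bnd psi)) as [gpsi [gp1 gp2]].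
  destruct (sup_exists _ (blev phi) 0 (zero phi hphi) (bnd phi)) as [gphi [gf1 gf2]].
  exists gpsi, gphi. split; [split; auto|]. split; [split; auto|].
  assert (g0 : 0 <= gphi) by (apply gf1; apply zero; auto).
  split.
  - apply gp1. exists phi. split; auto.
    exists (mkC (blev psi) (bidx psi)). split.
    + split; simpl; auto. intro j; lia.
    + unfold BBk, IIk. rewrite Z.opp_involutive.
      destruct (L1k d n m hn hm k phi psi (mkC (blev psi) (bidx psi)) hch)
        as [A [hA1 hA2]].
      { split; simpl; auto. intro j; lia. }
      exists A. split; auto.
      replace (0 <=? Z.of_nat k) with true by (symmetry; apply Z.leb_le; lia).
      rewrite Nat2Z.id. auto.
  - apply gp2. intros x [chi [[I [hI hB]] hchi]].
    destruct (Z_lt_le_dec x (Z.of_nat k)) as [lt|le]; [lia|].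
    unfold BBk, IIk in hB. rewrite Z.opp_involutive in hB.
    destruct hB as [J [hJ hc]].
    replace (0 <=? x) with true in hc by (symmetry; apply Z.leb_le; lia).
    replace (Z.to_nat x) with (Z.to_nat (x - Z.of_nat k) + k)%nat in hc by lia.
    destruct (split_ck d n _ _ _ _ hc) as [K [hK1 hK2]].
    destruct (L1k d n m hn hm k phi psi I hch hI) as [A [hA1 hA2]].
    pose proof (uniqk d n hn _ _ _ _ hK2 hA2). subst K.
    enough (x - Z.of_nat k <= gphi) by lia.
    apply gf1. exists chi. split; auto.
    exists A. split; auto. unfold BBk, IIk. rewrite Z.opp_involutive.
    exists J. split; auto.
    replace (0 <=? x - Z.of_nat k) with true by (symmetry; apply Z.leb_le; lia).
    auto.
Qed.
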